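(* Under either the overlap preference model or the cost preference model, for every allocation rule $F$ that is exhaustive and strongly unanimous, the pair $\langle R,F\rangle$, where $R$ is the nomination shortlisting rule, is U-FSSP-P.
   Context: Let $\mathbb{P}=\{p_1,\dots,p_m\}$ be a finite set of projects, $c:\mathbb{P}\to\mathbb{N}$ a cost function with $c(P)=\sum_{p\in P}c(p)$, $B\in\mathbb{N}$ a budget with $c(p)\le B$ for all $p$; agents $\mathcal{N}=\{1,\dots,n\}$. Tie-breaking: for a nonempty family $\mathfrak{P}$ of subsets of $\mathbb{P}$, $T(\mathfrak{P})$ is the unique $P\in\mathfrak{P}$ such that for all $P'\in\mathfrak{P}\setminus\{P\}$ the lowest-index project of $(P\setminus P')\cup(P'\setminus P)$ lies in $P$. Greedy selection $\mathit{GREED}(P,\gg)$, for $P\subseteq\mathbb{P}$ and a strict linear order $\gg$ on $P$, examines projects in the order $\gg$ and selects a project iff doing so keeps the total cost of selected projects at most $B$. Shortlisting stage: shortlisting instance $\langle\mathbb{P},c,B\rangle$; shortlisting profile $\boldsymbol{P}=(P_1,\dots,P_n)$, $P_i\subseteq\mathbb{P}$, $\bigcup\boldsymbol{P}=P_1\cup\dots\cup P_n$; $(\boldsymbol{P}_{-i},P_i')$ replaces $P_i$ by $P_i'$. The nomination shortlisting rule returns $R(I,\boldsymbol{P})=\bigcup\boldsymbol{P}$. Each agent $i$ has an awareness set $C_i\subseteq\mathbb{P}$; $\boldsymbol{C}=(C_1,\dots,C_n)$. Allocation stage: allocation instance $\langle\mathcal{P},c,B\rangle$, $\mathcal{P}\subseteq\mathbb{P}$;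 profile $\boldsymbol{A}=(A_1,\dots,A_n)$, $A_i\subseteq\mathcal{P}$; $A\subseteq\mathcal{P}$ is feasible if $c(A)\le B$, exhaustive if feasible and there is no $p\in\mathcal{P}\setminus A$ with $c(A\cup\{p\})\le B$; an allocation rule $F$ outputs a feasible $F(I,\boldsymbol{A})$; $F$ is exhaustive if its output is always exhaustive; $F$ is strongly unanimous if for every allocation instance $I$, every agent $i$, every feasible $A$, and every profile $\boldsymbol{A}$ with at least 3 agents in which $A_{i'}=A$ for all $i'\ne i$, we have $F(I,\boldsymbol{A})\supseteq A$. Preferences: each agent $i$ has a strict linear order $\rhd_i$ on $\mathbb{P}$; $\mathit{top}_i(\mathcal{P})=\mathit{GREED}(\mathcal{P},\rhd_i|_{\mathcal{P}})$. For $P\subseteq\mathbb{P}$: overlap model $A\succeq_P A'$ iff $|A\cap P|\ge|A'\cap P|$; cost model $A\succeq_P A'$ iff $c(A\cap P)\ge c(A'\cap P)$; $\succ_P$ its strict part. $\mathit{best}(\succ,\mathfrak{P})$ is the set of elements of $\mathfrak{P}$ undominated w.r.t. $\succ$. Best response: for $I=\langle\mathcal{P},c,B\rangle$, profile $\boldsymbol{A}$, agent $i$: $A_i^\star(I,\boldsymbol{A})=T(\mathit{best}(\succ_{\mathit{top}_i(\mathcal{P})},\{F(I,(\boldsymbol{A}_{-i},A_i'))\mid A_i'\subseteq\mathcal{P}\}))$ and $F^\star(I,\boldsymbol{A})=F(I,(\boldsymbol{A}_{-i},A_i^\star(I,\boldsymbol{A})))$. Pessimistic manipulation: given $R,F$,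 shortlisting instance $I_1$, profile $\boldsymbol{P}$, agent $i$, $P_i'\subseteq\mathbb{P}$, let $\mathcal{P}=R(I_1,\boldsymbol{P})$, $\mathcal{P}'=R(I_1,(\boldsymbol{P}_{-i},P_i'))$, $I_2=\langle\mathcal{P},c,B\rangle$, $I_2'=\langle\mathcal{P}',c,B\rangle$, $Q=\mathit{top}_i(\mathcal{P}\cup\mathcal{P}')$. $P_i'$ is a successful pessimistic manipulation if for all profiles $\boldsymbol{A}$ on $\mathcal{P}$ and $\boldsymbol{A}'$ on $\mathcal{P}'$, $F^\star(I_2',\boldsymbol{A}')\succeq_Q F^\star(I_2,\boldsymbol{A})$, strictly for at least one pair. U-FSSP-P: for a preference model, $\langle R,F\rangle$ is U-FSSP-P if for every shortlisting instance, awareness profile $\boldsymbol{C}$, shortlisting profile $\boldsymbol{P}$ with $P_{i'}\subseteq C_{i'}$ for all $i'$, and agent $i$, there is no $P_i'\subseteq C_i\cup\bigcup\boldsymbol{P}$ such that submitting $P_i'$ instead of $\mathit{top}_i(C_i\cup\bigcup\boldsymbol{P})$ (i.e., going from $(\boldsymbol{P}_{-i},\mathit{top}_i(C_i\cup\bigcup\boldsymbol{P}))$ to $(\boldsymbol{P}_{-i},P_i')$) is a successful pessimistic manipulation for $i$. *)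

(* Defs.v *)
From mathcomp Require Import all_boot all_order.
From mathcomp Require Import fingroup perm.

Set Implicit Arguments.
Unset Strict Implicit.
Unset Printing Implicit Defensive.

(* Projects are 'I_m (p_1,...,p_m, index order = order of 'I_m),
   agents are 'I_n, costs c : 'I_m -> nat, budget B : nat. *)

Section Defs.
Variable m : nat.
Implicit Types (c : 'I_m -> nat) (B : nat) (P S X Y : {set 'I_m}).

Definition csum c P : nat := \sum_(p in P) c p.

Definition tb_better (P P' : {set 'I_m}) : bool :=
  let D := (P :\: P') :|: (P' :\: P) in
  [exists x in D, (x \in P) && [forall y in D, (val x <= val y)%N]].

Definition tiebreak (fam : {set {set 'I_m}}) : {set 'I_m} :=
  odflt set0 [pick P in fam | [forall P' in fam, (P' != P) ==> tb_better P P']].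

Definition greedy c B (s : seq 'I_m) : {set 'I_m} :=
  foldl (fun A p => if (csum c (p |: A) <= B)%N then p |: A else A) set0 s.

(* A strict linear order on the projects is given by a permutation sigma:
   sigma 0 is the most preferred project, sigma 1 the second, etc. *)
Definition pref_list (sigma : {perm 'I_m}) : seq 'I_m :=
  [seq sigma k | k <- enum 'I_m].

Definition top c B (sigma : {perm 'I_m}) P : {set 'I_m} :=
  greedy c B [seq p <- pref_list sigma | p \in P].

End Defs.

Inductive pref_model := Overlap | CostModel.

Definition weak_pref (model : pref_model) m (c : 'I_m -> nat) (Q X Y : {set 'I_m}) : bool :=
  match model with
  | Overlap => (#|Y :&: Q| <= #|X :&: Q|)%N
  | CostModel => (csum c (Y :&: Q) <= csum c (X :&: Q))%N
  end.

Definition strict_pref (model : pref_model) m (c : 'I_m -> nat) (Q X Y : {set 'I_m}) : bool :=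
  weak_pref model c Q X Y && ~~ weak_pref model c Q Y X.

Definition best m (strict : {set 'I_m} -> {set 'I_m} -> bool)
  (fam : {set {set 'I_m}}) : {set {set 'I_m}} :=
  [set X in fam | ~~ [exists Y in fam, strict Y X]].

Definition upd n T (Pr : 'I_n -> T) (i : 'I_n) (X : T) : 'I_n -> T :=
  fun j => if j == i then X else Pr j.

Definition profile_on n m (PP : {set 'I_m}) (A : 'I_n -> {set 'I_m}) : Prop :=
  forall j, A j \subset PP.

(* An allocation rule (for n agents): takes an allocation instance
   <PP, c, B> (over the project universe 'I_m) and a profile. *)
Definition alloc_rule (n : nat) :=
  forall m : nat, ('I_m -> nat) -> nat -> {set 'I_m} -> ('I_n -> {set 'I_m}) -> {set 'I_m}.

Definition short_rule (n : nat) :=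
  forall m : nat, ('I_m -> nat) -> nat -> ('I_n -> {set 'I_m}) -> {set 'I_m}.

Definition nomination (n : nat) : short_rule n :=
  fun m c B Pr => \bigcup_(j < n) Pr j.

Definition valid_instance m (c : 'I_m -> nat) (B : nat) : Prop :=
  forall p : 'I_m, (c p <= B)%N.

Definition feasible m (c : 'I_m -> nat) B (PP A : {set 'I_m}) : Prop :=
  A \subset PP /\ (csum c A <= B)%N.

Definition exhaustive_set m (c : 'I_m -> nat) B (PP A : {set 'I_m}) : Prop :=
  feasible c B PP A /\ ~ (exists p, p \in PP :\: A /\ (csum c (p |: A) <= B)%N).

Definition exhaustive n (F : alloc_rule n) : Prop :=
  forall m (c : 'I_m -> nat) B (PP : {set 'I_m}) (A : 'I_n -> {set 'I_m}),
    valid_instance c B -> profile_on PP A ->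
    exhaustive_set c B PP (@F m c B PP A).

Definition strongly_unanimous n (F : alloc_rule n) : Prop :=
  forall m (c : 'I_m -> nat) B (PP : {set 'I_m}) (i : 'I_n) (A : {set 'I_m})
         (Ap : 'I_n -> {set 'I_m}),
    valid_instance c B -> feasible c B PP A -> profile_on PP Ap ->
    (2 < n)%N -> (forall i', i' != i -> Ap i' = A) ->
    A \subset @F m c B PP Ap.

Section Manip.
Variables (model : pref_model) (n : nat) (F : alloc_rule n).
Variables (m : nat) (c : 'I_m -> nat) (B : nat) (pref : 'I_n -> {perm 'I_m}).

Definition best_resp (PP : {set 'I_m}) (A : 'I_n -> {set 'I_m}) (i : 'I_n) : {set 'I_m} :=
  tiebreak (best (strict_pref model c (top c B (pref i) PP))
                 [set @F m c B PP (upd A i X) | X in powerset PP]).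

Definition Fstar (PP : {set 'I_m}) (A : 'I_n -> {set 'I_m}) (i : 'I_n) : {set 'I_m} :=
  @F m c B PP (upd A i (best_resp PP A i)).

Definition succ_pess_manip (R : short_rule n) (Pr : 'I_n -> {set 'I_m})
  (i : 'I_n) (P' : {set 'I_m}) : Prop :=
  let PP := R m c B Pr in
  let PP' := R m c B (upd Pr i P') in
  let Q := top c B (pref i) (PP :|: PP') in
  (forall A A', profile_on PP A -> profile_on PP' A' ->
     weak_pref model c Q (Fstar PP' A' i) (Fstar PP A i)) /\
  (exists A A', profile_on PP A /\ profile_on PP' A' /\
     strict_pref model c Q (Fstar PP' A' i) (Fstar PP A i)).
End Manip.

Definition U_FSSP_P (model : pref_model) (n : nat) (R : short_rule n) (F : alloc_rule n) : Prop :=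
  forall m (c : 'I_m -> nat) B, valid_instance c B ->
  forall (pref : 'I_n -> {perm 'I_m}) (C Pr : 'I_n -> {set 'I_m}),
    (forall j, Pr j \subset C j) ->
    forall (i : 'I_n) (P' : {set 'I_m}),
      P' \subset C i :|: \bigcup_(j < n) Pr j ->
      ~ succ_pess_manip model F c B pref R
          (upd Pr i (top c B (pref i) (C i :|: \bigcup_(j < n) Pr j))) i P'.

Arguments nomination : clear implicits.

(* Main.v *)
Require Import Defs.
From mathcomp Require Import all_boot all_order.
From mathcomp Require Import fingroup perm.
Set Implicit Arguments.
Unset Strict Implicit.

Section G.
Variables (m : nat) (c : 'I_m -> nat) (B : nat).
Implicit Types (A X Y : {set 'I_m}) (s : seq 'I_m).

Lemma csum_split (X Y : {set 'I_m}) : X \subset Y ->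
  csum c Y = csum c X + csum c (Y :\: X).
Proof.
move=> sXY; rewrite /csum (big_setID X) /=.
by rewrite (setIidPr sXY).
Qed.

Lemma csum_mono (X Y : {set 'I_m}) : X \subset Y -> csum c X <= csum c Y.
Proof. by move=> s; rewrite (csum_split s) leq_addr. Qed.

Lemma csumU1 (x : 'I_m) (X : {set 'I_m}) : x \notin X -> csum c (x |: X) = c x + csum c X.
Proof. by move=> h; rewrite /csum big_setU1. Qed.

Definition gstep (A : {set 'I_m}) (p : 'I_m) :=
  if csum c (p |: A) <= B then p |: A else A.

Lemma greedyE s : greedy c B s = foldl gstep set0 s.
Proof. by []. Qed.

Lemma gmono s A : A \subset foldl gstep A s.
Proof.
elim: s A => [|x s IH] A //=.
apply: subset_trans (IH _); rewrite /gstep; case: ifP => // _; exact: subsetUr.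
Qed.

Lemma gsub s A : foldl gstep A s \subset A :|: [set x in s].
Proof.
elim: s A => [|x s IH] A /=; first by rewrite subsetUl.
apply: (subset_trans (IH _)); apply/subsetP => y; rewrite /gstep.
case: ifP => _; rewrite !inE.
- by case/orP=> [/orP[->|->]|->]; rewrite ?orbT.
- by case/orP=> [->|->]; rewrite ?orbT.
Qed.

Lemma gfeas s A : csum c A <= B -> csum c (foldl gstep A s) <= B.
Proof.
elim: s A => [|x s IH] A //= h; apply: IH; rewrite /gstep; by case: ifP.
Qed.

Lemma gmax s A x : x \in s -> x \notin foldl gstep A s ->
  B < csum c (x |: foldl gstep A s).
Proof.
elim: s A => [|y s IH] A //=; rewrite inE => /orP[/eqP->|xs] nx; last exact: IH.
have sub := gmono s (gstep A y).
move: nx sub; rewrite {1 3}/gstep; case: ifP => h nx sub.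
- by move: nx; rewrite (subsetP sub y) // !inE eqxx.
- rewrite ltnNge; apply: contraFN h => h2; apply: leq_trans h2.
  apply: csum_mono; exact: setUS.
Qed.

Lemma gfilter (V : {pred 'I_m}) s A :
  (forall x, x \in s -> x \notin V -> x \notin foldl gstep A s) ->
  foldl gstep A [seq x <- s | x \in V] = foldl gstep A s.
Proof.
elim: s A => [|y s IH] A //= h.
case: ifP => yV /=.
  apply: IH => x xs xV; apply: h => //; by rewrite inE xs orbT.
have ny := h y (mem_head _ _) (negbT yV).
have e : gstep A y = A.
  move: ny => /=; rewrite /gstep; case: ifP => // _ ny.
  move: ny; rewrite -/gstep.
  by rewrite (subsetP (gmono s (y |: A)) y) // !inE eqxx.
rewrite e IH //= -e => x xs xV; apply: h => //; by rewrite inE xs orbT.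
Qed.
End G.

Lemma top_greedy m (c : 'I_m -> nat) B sigma (V : {set 'I_m}) :
  top c B sigma V = foldl (gstep c B) set0 [seq p <- pref_list sigma | p \in V].
Proof. by []. Qed.

Lemma in_pref_list m (sigma : {perm 'I_m}) p : p \in pref_list sigma.
Proof.
apply/mapP; exists ((sigma^-1)%g p); first by rewrite mem_enum.
by rewrite permKV.
Qed.

Lemma csum0 m (c : 'I_m -> nat) : csum c set0 = 0.
Proof. by rewrite /csum big_set0. Qed.

Lemma brsub model n (F : alloc_rule n) m (c : 'I_m -> nat) B pref PP A i :
  exhaustive F -> valid_instance c B -> profile_on PP A ->
  best_resp model F c B pref PP A i \subset PP.
Proof.
move=> Hex vc pA; rewrite /best_resp /tiebreak.
case: pickP => [X /andP[Xin _]|_] /=; last exact: sub0set.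
move: Xin; rewrite /best inE => /andP[/imsetP[Y Yin ->] _].
have pY : profile_on PP (upd A i Y).
  move=> j; rewrite /upd; case: eqP => _; last exact: pA.
  by rewrite powersetE in Yin.
by have [[]] := Hex _ c B PP (upd A i Y) vc pY.
Qed.

Lemma out_prof n m (PP : {set 'I_m}) (A : 'I_n -> {set 'I_m}) i (Y : {set 'I_m}) :
  profile_on PP A -> Y \subset PP -> profile_on PP (upd A i Y).
Proof. by move=> pA sY j; rewrite /upd; case: eqP. Qed.

Lemma Fstar_const model n (F : alloc_rule n) m (c : 'I_m -> nat) B pref (PP : {set 'I_m}) i (Y : {set 'I_m}) :
  (2 < n)%N -> exhaustive F -> strongly_unanimous F -> valid_instance c B ->
  exhaustive_set c B PP Y ->
  Fstar model F c B pref PP (fun _ => Y) i = Y.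
Proof.
move=> n3 Hex Hsu vc [[sY fY] nY].
have pA : profile_on PP (fun _ : 'I_n => Y) by [].
have bs : best_resp model F c B pref PP (fun _ => Y) i \subset PP by apply: brsub.
rewrite /Fstar.
set Z := F m c B PP _.
have [[sZ fZ] _] := Hex _ c B PP (upd (fun _ => Y) i (best_resp model F c B pref PP (fun _ => Y) i)) vc (out_prof i pA bs).
have YZ : Y \subset Z.
  apply: (Hsu _ c B PP i Y) => //; first exact: out_prof.
  by move=> j /negbTE; rewrite /upd => ->.
apply/eqP; rewrite eqEsubset YZ andbT; apply/subsetP => p pZ.
apply/negPn/negP => pY; apply: nY; exists p; split.
  by rewrite inE pY (subsetP sZ).
apply: leq_trans fZ; apply: csum_mono; by rewrite subUset sub1set pZ YZ.
Qed.

Lemma Fstar_full model n (F : alloc_rule n) m (c : 'I_m -> nat) B pref PP A i :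
  exhaustive F -> valid_instance c B -> profile_on PP A ->
  csum c PP <= B ->
  Fstar model F c B pref PP A i = PP.
Proof.
move=> Hex vc pA fP.
have bs : best_resp model F c B pref PP A i \subset PP by apply: brsub.
rewrite /Fstar.
have [[sZ fZ] nZ] := Hex _ c B PP (upd A i (best_resp model F c B pref PP A i)) vc (out_prof i pA bs).
apply/eqP; rewrite eqEsubset sZ /=; apply/subsetP => p pP.
apply/negPn/negP => pZ; apply: nZ; exists p; split; first by rewrite inE pZ.
apply: leq_trans fP; apply: csum_mono; by rewrite subUset sub1set pP.
Qed.

Lemma wp_csum model m (c : 'I_m -> nat) (T X : {set 'I_m}) :
  weak_pref model c T X T -> csum c T <= csum c (X :&: T).
Proof.
case: model => /=; rewrite setIid // => h.
have /eqP -> : X :&: T == T by rewrite eqEcard subsetIr h.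
by [].
Qed.

Lemma wp_self model m (c : 'I_m -> nat) (T X : {set 'I_m}) :
  weak_pref model c T T X.
Proof.
case: model => /=; rewrite setIid.
  by apply: subset_leq_card; exact: subsetIr.
by apply: csum_mono; exact: subsetIr.
Qed.

Theorem proposition5 :
  forall (model : pref_model) (n : nat) (F : alloc_rule n),
    (2 < n)%N ->
    exhaustive F -> strongly_unanimous F ->
    U_FSSP_P model (nomination n) F.
Proof.
move=> model n F n3 Hex Hsu m c B vc pref C Pr _ i P' HP' [H1 H2].
set U := C i :|: \bigcup_(j < n) Pr j.
set T := top c B (pref i) U.
set Pr0 := upd Pr i T.
set PP := nomination n m c B Pr0.
set PP' := nomination n m c B (upd Pr0 i P').
have sTU : T \subset U.
  rewrite /T top_greedy; apply: (subset_trans (gsub _ _ _ _)).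
  apply/subsetP => x; rewrite in_setU in_set0 in_set mem_filter /= => /andP[]; by [].
have feasT : csum c T <= B by rewrite /T top_greedy; apply: gfeas; rewrite csum0.
have maxT : forall p, p \in U -> p \notin T -> B < csum c (p |: T).
  move=> p pU pT; move: pT; rewrite /T top_greedy => pT; apply: gmax => //.
  by rewrite mem_filter pU in_pref_list.
have sTPP : T \subset PP.
  by apply: (bigcup_max i) => //; rewrite /Pr0 /upd eqxx.
have sPrU : forall j, Pr j \subset U.
  move=> j; apply: subset_trans (subsetUr _ _); exact: (bigcup_max j).
have sPPU : PP \subset U.
  rewrite /PP /nomination; apply/bigcupsP => j _; rewrite /Pr0 /upd.
  case: (j =P i) => _ //; exact: sPrU.
have sPP'U : PP' \subset U.
  rewrite /PP' /nomination; apply/bigcupsP => j _; rewrite /Pr0 /upd.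
  case: (j =P i) => _; first exact: HP'.
  exact: sPrU.
have QT : top c B (pref i) (PP :|: PP') = T.
  have sV : PP :|: PP' \subset U by rewrite subUset sPPU.
  rewrite top_greedy.
  have -> : [seq p <- pref_list (pref i) | p \in PP :|: PP'] =
     [seq p <- [seq p <- pref_list (pref i) | p \in U] | p \in PP :|: PP'].
    rewrite -filter_predI; apply: eq_filter => x /=.
    by case: (boolP (x \in PP :|: PP')) => // /(subsetP sV) ->.
  rewrite gfilter // => x _ xV; apply: contra xV => xT.
  by rewrite inE (subsetP sTPP).
move: H1 H2; rewrite /= -/PP -/PP' QT => H1 H2.
case: (boolP [exists o, (o \in PP) && (o \notin T)]) => [/existsP[o /andP[oPP oT]]|].
- have oPP' : o \in PP'.
    move: oPP; rewrite /PP /PP' /nomination => /bigcupP[j _].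
    rewrite /Pr0 /upd; case: eqP => [_ oT'|ji oj].
      by rewrite oT' in oT.
    by apply/bigcupP; exists j => //; case: eqP.
  set X' := greedy c B (o :: enum PP').
  have oX : o \in X'.
    rewrite /X' greedyE /=; apply: (subsetP (gmono _ _ _ _)).
    by rewrite /gstep csumU1 ?in_set0 // csum0 addn0 (vc o) in_setU1 eqxx.
  have sX : X' \subset PP'.
    rewrite /X' greedyE; apply: (subset_trans (gsub _ _ _ _)).
    apply/subsetP => x; rewrite in_setU in_set0 in_set inE mem_enum /=.
    by case/orP=> [/eqP->|].
  have fX : csum c X' <= B by rewrite /X' greedyE; apply: gfeas; rewrite csum0.
  have exX : exhaustive_set c B PP' X'.
    split => // -[p [/setDP[pP pX] fp]].
    have := @gmax m c B (o :: enum PP') set0 p; rewrite -greedyE -/X'.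
    by rewrite inE mem_enum pP orbT => /(_ isT pX); rewrite ltnNge fp.
  have exT : exhaustive_set c B PP T.
    split => // -[p [/setDP[pP pT] fp]].
    by move: (maxT p (subsetP sPPU p pP) pT); rewrite ltnNge fp.
  have := H1 (fun _ => T) (fun _ => X') (fun _ => sTPP) (fun _ => sX).
  rewrite !Fstar_const // => /wp_csum h.
  have := maxT o (subsetP sPPU o oPP) oT.
  rewrite csumU1 // ltnNge; apply/negP/negPn.
  apply: leq_trans fX.
  have oXT : o \notin X' :&: T by rewrite inE (negbTE oT) andbF.
  apply: leq_trans (_ : csum c (o |: (X' :&: T)) <= _).
    by rewrite csumU1 // leq_add2l.
  by apply: csum_mono; rewrite subUset sub1set oX subsetIl.
- rewrite negb_exists => /forallP hPP.
  have ePP : PP = T.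
    apply/eqP; rewrite eqEsubset sTPP andbT; apply/subsetP => x xP.
    by move: (hPP x); rewrite xP /= negbK.
  case: H2 => [A [A' [pA [pA' hs]]]].
  move: hs; rewrite (@Fstar_full model n F m c B pref PP A i) //; last by rewrite ePP.
  by rewrite ePP /strict_pref wp_self andbF.
Qed.
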